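(* Let $X$ be a compact subset of $\mathbb{R}$ and $m$ an atom-free Borel probability measure on $X$. For all $p\ge1$, all $h:X\to\mathbb{C}$ and all $\varepsilon>0$, $$\int_X\mathrm{osc}(h,\varepsilon,x)^p\,dm(x)\le2\varepsilon\,\mathrm{Var}_p(h)^p.$$
   Context: $d(x,y)=m(\{z\in X:x\le z\le y\text{ or }y\le z\le x\})$, $B_d(x,\varepsilon)=\{y\in X:d(x,y)<\varepsilon\}$, $\mathrm{osc}(h,\varepsilon,x)=\operatorname{ess\,sup}_m\{|h(y)-h(y')|:y,y'\in B_d(x,\varepsilon)\}$. $\mathrm{Var}_p(h)=\sup\{(\sum_{i=1}^k|h(x_i)-h(x_{i-1})|^p)^{1/p}:k\ge1,\ x_0<x_1<\dots<x_k\text{ in }X\}$. *)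

(* Defs.v *)
From HB Require Import structures.
From mathcomp Require Import all_boot all_order all_algebra.
From mathcomp Require Import all_classical all_reals all_analysis.
From mathcomp Require Import ess_sup_inf.
From mathcomp Require Import complex.
Set Implicit Arguments. Unset Strict Implicit. Unset Printing Implicit Defensive.
Import Order.TTheory GRing.Theory Num.Theory.
Import numFieldNormedType.Exports.
Local Open Scope classical_set_scope.
Local Open Scope ring_scope.
Local Open Scope ereal_scope.

Notation Cx R := (complex.complex R).

Definition cmod (R : realType) (z : Cx R) : R := complex.ComplexField.Normc.normc z.

Section Defs.
Context {R : realType}.
Variable (X : set R) (m : probability R R).

Definition dist_m (x y : R) : \bar R :=
  m [set z | X z /\ ((x <= z <= y)%R \/ (y <= z <= x)%R)].

Definition ball_m (x : R) (eps : R) : set R :=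
  [set y | X y /\ dist_m x y < eps%:E].

(* osc(h,eps,x) = ess sup_{m x m} { |h y - h y'| : y, y' in B_d(x,eps) }
   (the function is extended by 0 outside B_d(x,eps)^2; since it is
   nonnegative this does not change the essential supremum unless the
   ball is null, in which case the oscillation is 0). *)
Definition osc (h : R -> Cx R) (eps : R) (x : R) : \bar R :=
  ess_sup (m \x m)
    (fun yy : R * R =>
       if `[< ball_m x eps yy.1 /\ ball_m x eps yy.2 >]
       then (cmod (h yy.1 - h yy.2))%:E else 0).

Definition var_p (p : R) (h : R -> Cx R) : \bar R :=
  ereal_sup [set v | exists (k : nat) (xs : nat -> R),
     [/\ (1 <= k)%N, (forall i, (i <= k)%N -> X (xs i)),
          (forall i, (i < k)%N -> (xs i < xs i.+1)%R) &
          v = ((\sum_(i < k) (cmod (h (xs i.+1) - h (xs i))) `^ p)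
                 `^ (p^-1))%R%:E]].

End Defs.

(* Main.v *)
Set Warnings "-all".
Require Import Defs.
From HB Require Import structures.
From mathcomp Require Import all_boot all_order all_algebra.
From mathcomp Require Import all_classical all_reals all_analysis.
From mathcomp Require Import ess_sup_inf.
From mathcomp Require Import complex.
From mathcomp Require Import zify.
From mathcomp Require Import ring lra.
Import Order.TTheory GRing.Theory Num.Theory.
Import numFieldNormedType.Exports.
Local Open Scope classical_set_scope.
Local Open Scope ring_scope.
Local Open Scope ereal_scope.

Section Part1.
Variables (R : realType) (X : set R) (m : probability R R).
Hypotheses (cX : compact X) (mX1 : m X = 1) (m0 : forall x : R, m [set x] = 0).

Let mX : measurable X := measurable_realfun.closed_measurable (compact_closed (@Rhausdorff R) cX).

Lemma m_fin (A : set R) : measurable A -> m A \is a fin_num.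
Proof. by move=> mA; rewrite fin_num_measure. Qed.

Definition Fc (t : R) : R := fine (m (X `&` `]-oo, t]%classic)).

Lemma Fc_ge0 t : (0 <= Fc t)%R.
Proof. by rewrite /Fc fine_ge0. Qed.

Lemma mI {s t : R} : (s <= t)%R ->
  m (X `&` `]s, t]%classic) = (Fc t - Fc s)%:E.
Proof.
move=> st.
have E : X `&` `]-oo, t]%classic = (X `&` `]-oo, s]%classic) `|` (X `&` `]s, t]%classic).
  apply/seteqP; split => z /=.
  - move=> [Xz]; rewrite ?in_itv /= => zt; have [zs|sz] := leP z s.
      by left; split => //; rewrite ?in_itv /= ?zs.
    by right; split => //; rewrite ?in_itv /= ?sz ?zt.
  - move=> [[Xz]|[Xz]]; rewrite !in_itv /=.
      by move=> zs; split => //; rewrite ?in_itv /= (le_trans zs st).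
    by move=> /andP[sz zt]; split => //; rewrite ?in_itv /= zt.
have D : (X `&` `]-oo, s]%classic) `&` (X `&` `]s, t]%classic) = set0.
  apply/seteqP; split => z //=; rewrite !in_itv /= => -[[_ zs] [_ /andP[sz _]]].
  by move: (lt_le_trans sz zs); rewrite ltxx.
have := measureU m (measurableI _ _ mX (measurable_itv _))
   (measurableI _ _ mX (measurable_itv _)) D.
rewrite -E /Fc => ->.
rewrite fineD ?m_fin //; try exact: measurableI.
rewrite addrAC subrr add0r fineK // m_fin //; exact: measurableI.
Qed.


Lemma Fc_mono {s t : R} : (s <= t)%R -> (Fc s <= Fc t)%R.
Proof.
move=> st; have := mI st; move/(congr1 fine) => /= E.
rewrite -subr_ge0 -E fine_ge0 //.
Qed.

Lemma mseq_small (S : nat -> set R) : (forall n, measurable (S n)) ->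
  {homo S : n k / (n <= k)%N >-> (k <= n)%O} -> m (\bigcap_n S n) = 0 ->
  forall e : R, (0 < e)%R -> exists n, m (S n) < e%:E.
Proof.
move=> mS hom h0 e e0.
have h1 : m (S 0%N) < +oo by rewrite -ge0_fin_numE ?m_fin.
have := @nonincreasing_cvg_mu _ _ _ m S h1 mS (bigcapT_measurable mS) hom.
set L := (X in _ --> X); have -> : L = 0%:E by exact: h0.
move=> /fine_cvgP[_ /cvgr_lt /(_ e e0)] [N _ HN].
exists N; have := HN N (leqnn N) => /=.
by rewrite -lte_fin fineK // m_fin.
Qed.

Lemma inv_le (n k : nat) : (n <= k)%N -> (k.+1%:R^-1 <= n.+1%:R^-1 :> R)%R.
Proof. by move=> nk; rewrite lef_pV2 ?posrE ?ltr0Sn // ler_nat ltnS. Qed.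

Lemma Fc_cont (t : R) : {for t, continuous Fc}.
Proof.
apply/cvgrPdist_lt => e e0.
pose R1 n := X `&` `]t, (t + n.+1%:R^-1)%R]%classic.
pose L1 n := X `&` `](t - n.+1%:R^-1)%R, t]%classic.
have mR1 n : measurable (R1 n) by apply: measurableI.
have mL1 n : measurable (L1 n) by apply: measurableI.
have [n1 Hn1] : exists n, m (R1 n) < e%:E.
  apply: mseq_small => //.
    move=> n k nk; apply/subsetPset => z [Xz]; rewrite /R1 /= !in_itv /=.
    move=> /andP[tz zk]; split => //; rewrite ?in_itv /= tz /=.
    by rewrite (le_trans zk) // lerD2l inv_le.
  rewrite (_ : \bigcap_n R1 n = set0) ?measure0 //.
  apply/seteqP; split => z // Hz.
  move: (Hz 0%N I) => [_] /=; rewrite in_itv /= => /andP[tz _].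
  have [k Hk] := ltr_add_invr tz.
  move: (Hz k I) => [_] /=; rewrite in_itv /= => /andP[_ zk].
  by move: (le_lt_trans zk Hk); rewrite ltxx.
have [n2 Hn2] : exists n, m (L1 n) < e%:E.
  apply: mseq_small => //.
    move=> n k nk; apply/subsetPset => z [Xz]; rewrite /L1 /= !in_itv /=.
    move=> /andP[kz zt]; split => //; rewrite ?in_itv /= zt andbT.
    by rewrite (le_lt_trans _ kz) // lerD2l lerN2 inv_le.
  apply/eqP; rewrite eq_le measure_ge0 andbT -(m0 t).
  apply: le_measure; rewrite ?inE //; first exact: bigcapT_measurable.
  move=> z Hz; move: (Hz 0%N I) => [_] /=; rewrite in_itv /= => /andP[_ zt].
  apply/eqP; rewrite eq_le zt /=; rewrite leNgt; apply/negP => zt'.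
  have [k Hk] := ltr_add_invr zt'.
  move: (Hz k I) => [_] /=; rewrite in_itv /= => /andP[kz _].
  by move: Hk; rewrite -ltrBrDr => /(lt_trans kz); rewrite ltxx.
apply/nbhs_ballP; exists (Num.min n1.+1%:R^-1 n2.+1%:R^-1)%R => /=.
  by rewrite lt_min !invr_gt0 !ltr0Sn.
move=> s; rewrite /ball /= lt_min => /andP[h1 h2].
have [ts|st] := leP t s.
- have := mI ts; move/(congr1 fine) => /= E.
  rewrite distrC ger0_norm ?subr_ge0 ?Fc_mono // -E.
  rewrite -lte_fin fineK ?m_fin //; last exact: measurableI.
  apply: le_lt_trans Hn1; apply: le_measure; rewrite ?inE //; try exact: measurableI.
  move=> z [Xz] /=; rewrite in_itv /= => /andP[tz zs]; split => //=.
  rewrite in_itv /= tz /= (le_trans zs) //.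
  by move: h1; rewrite distrC ger0_norm ?subr_ge0 // ltrBlDl => /ltW.
- have := mI (ltW st); move/(congr1 fine) => /= E.
  rewrite ger0_norm ?subr_ge0 ?Fc_mono ?(ltW st) // -E.
  rewrite -lte_fin fineK ?m_fin //; last exact: measurableI.
  apply: le_lt_trans Hn2; apply: le_measure; rewrite ?inE //; try exact: measurableI.
  move=> z [Xz] /=; rewrite in_itv /= => /andP[sz zt]; split => //=.
  rewrite in_itv /= zt andbT (le_lt_trans _ sz) //.
  by move: h2; rewrite ger0_norm ?subr_ge0 ?(ltW st) // ltrBlDl -ltrBlDr => /ltW.
Qed.


Lemma Xbounded : exists B : R, forall x, X x -> (`|x| <= B)%R.
Proof.
have := compact_bounded cX; rewrite /bounded_near => -[M [Mr HM]].
by exists (M+1)%R => x Xx; apply: (HM (M+1)%R) => //; rewrite ltrDl.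
Qed.

Lemma quantiles (N : nat) : (0 < N)%N ->
  exists a : nat -> R, (forall j, (j <= N)%N -> Fc (a j) = (j%:R / N%:R)%R) /\
    (forall x, X x -> (a 0%N < x)%R /\ (x <= a N)%R).
Proof.
move=> N0; have [B HB] := Xbounded.
pose lo := (- B - 1)%R; pose hi := B.
have Xlo x : X x -> (lo < x)%R.
  move=> /HB; rewrite /lo ler_norml => /andP[h _].
  by rewrite (lt_le_trans _ h) // ltrBlDr ltrDl.
have Xhi x : X x -> (x <= hi)%R by move=> /HB /(le_trans (ler_norm x)).
have Flo : Fc lo = 0%R.
  rewrite /Fc (_ : _ `&` _ = set0) ?measure0 //; apply/seteqP; split => z //=.
  by move=> [/Xlo Xz]; rewrite in_itv /= leNgt Xz.
have Fhi : Fc hi = 1%R.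
  rewrite /Fc (_ : _ `&` _ = X) ?mX1 //; apply/seteqP; split => z //=.
  - by move=> [].
  - by move=> Xz; split => //; rewrite in_itv /= Xhi.
have lohi : (lo <= hi)%R.
  have := Xhi; have : X !=set0.
    apply/set0P/negP => /eqP X0; move: mX1; rewrite X0 measure0 => /eqP.
    by rewrite eqe eq_sym oner_eq0.
  by move=> [x Xx] /(_ x Xx); apply: le_trans; exact/ltW/Xlo.
have Q c : exists a, (0 <= c <= 1)%R -> Fc a = c.
  have [/andP[c0 c1]|] := boolP (0 <= c <= 1)%R; last by exists 0%R.
  have := @IVT R Fc lo hi c lohi (continuous_subspaceT (fun t => Fc_cont t)).
  rewrite Flo Fhi ge_min le_max c0 c1 /= orbT => /(_ isT) [a _ Ha].
  by exists a.
have [q Hq] := choice Q.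
exists (fun j => if j == 0%N then lo else if j == N then hi else q (j%:R / N%:R)%R).
split; last first.
  move=> x Xx /=; rewrite eqxx; have -> : (N == 0%N) = false by rewrite gtn_eqF.
  by split; [exact: Xlo | exact: Xhi].
move=> j jN; case: ifP => [/eqP ->|_]; first by rewrite Flo mul0r.
case: ifP => [/eqP ->|_]; first by rewrite Fhi divff // pnatr_eq0 -lt0n.
apply: Hq; rewrite divr_ge0 ?ler0n //= ler_pdivrMr ?ltr0n // mul1r ler_nat //.
Qed.


Section Pieces.
Variables (N : nat) (a : nat -> R).
Hypotheses (N0 : (0 < N)%N) (Ha : forall j, (j <= N)%N -> Fc (a j) = (j%:R / N%:R)%R)
  (Hx : forall x, X x -> (a 0%N < x)%R /\ (x <= a N)%R).

Lemma a_mono j k : (j <= k)%N -> (k <= N)%N -> (a j <= a k)%R.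
Proof.
move=> jk kN; rewrite leNgt; apply/negP => kj.
have := Fc_mono (ltW kj); rewrite !Ha ?(leq_trans jk) //.
rewrite ler_pM2r ?invr_gt0 ?ltr0n // ler_nat => kj'.
have jk' : j = k by apply/eqP; rewrite eqn_leq jk kj'.
by move: kj; rewrite jk' ltxx.
Qed.

Definition A j := X `&` `]a j, a j.+1]%classic.

Lemma mA_meas j : measurable (A j).
Proof. exact: measurableI. Qed.

Lemma mA j : (j < N)%N -> m (A j) = (N%:R^-1)%:E.
Proof.
move=> jN; rewrite /A mI ?a_mono // !Ha // ?(ltnW jN) //.
by rewrite -mulrBl -natrB // subSnn mul1r.
Qed.

Lemma cover x : X x -> exists2 j, (j < N)%N & A j x.
Proof.
move=> Xx; have [h0 hN] := Hx x Xx.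
suff : forall n, (n <= N)%N -> (x <= a n)%R -> exists2 j, (j < n)%N & A j x.
  by move=> /(_ N (leqnn N) hN) [j jN Ajx]; exists j.
elim=> [|n IH] nN xn; first by move: (lt_le_trans h0 xn); rewrite ltxx.
have [xn'|nx] := leP x (a n).
  by have [j jn Aj] := IH (ltnW nN) xn'; exists j => //; exact: ltnW.
by exists n => //; split => //=; rewrite in_itv /= nx xn.
Qed.


Lemma Dmeas x y : measurable [set z | X z /\ ((x <= z <= y)%R \/ (y <= z <= x)%R)].
Proof.
rewrite (_ : [set z | _] = X `&` (`[x, y]%classic `|` `[y, x]%classic)).
  by apply: measurableI => //; apply: measurableU; exact: measurable_itv.
by apply/seteqP; split => z /=; rewrite !in_itv /=.
Qed.

Lemma sep j k x x' y y' (e : R) : (j.+1 <= k)%N -> (k < N)%N ->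
  (2 * e <= Fc (a k) - Fc (a j.+1))%R -> A j x -> A k x' ->
  ball_m X m x e y -> ball_m X m x' e y' -> (y < y')%R.
Proof.
move=> jk kN he [Xx]; rewrite /= in_itv /= => /andP[_ xa] [Xx'].
rewrite /= in_itv /= => /andP[ax' _] [Xy dy] [Xy' dy'].
rewrite ltNge; apply/negP => y'y.
have aa : (a j.+1 <= a k)%R by apply: a_mono => //; exact: ltnW.
have := mI aa.
have sub : X `&` `]a j.+1, a k]%classic `<=`
    [set z | X z /\ ((x <= z <= y)%R \/ (y <= z <= x)%R)] `|`
    [set z | X z /\ ((x' <= z <= y')%R \/ (y' <= z <= x')%R)].
  move=> z [Xz] /=; rewrite in_itv /= => /andP[az za].
  have xz : (x <= z)%R by apply: (le_trans xa); exact: ltW.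
  have zx' : (z <= x')%R by apply: (le_trans za); exact: ltW.
  have [zy|yz] := leP z y.
    by left; split => //; left; rewrite ?xz ?zy.
  by right; split => //; right; rewrite ?zx' ?(le_trans y'y) // ltW.
have := le_measure m _ _ sub; rewrite !inE.
move=> /(_ (measurableI _ _ mX (measurable_itv _))
         (measurableU _ _ (Dmeas x y) (Dmeas x' y'))) h1 h2.
have h3 := le_trans h1 (measureU2 m (Dmeas x y) (Dmeas x' y')).
have h4 : m (X `&` `]a j.+1, a k]%classic) < (e + e)%:E.
  by apply: (le_lt_trans h3); rewrite EFinD lteD.
move: h4; rewrite h2 lte_fin => h5.
by move: (le_lt_trans he h5); rewrite -mulr2n mulr_natl ltxx.
Qed.

End Pieces.

Section Chain.
Variables (p : R) (h : R -> Cx R) (v : R).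
Hypotheses (p1 : (1 <= p)%R) (Hv : var_p X p h = v%:E).

Definition cm (y y' : R) : R := cmod (h y - h y')%R.
Definition Tp (y y' : R) : R := (cm y y' `^ p)%R.

Lemma cm_ge0 y y' : (0 <= cm y y')%R.
Proof. by rewrite /cm /cmod; case: (h y - h y')%R => a b /=; exact: sqrtr_ge0. Qed.

Lemma cm_sym y y' : cm y y' = cm y' y.
Proof. by rewrite /cm /cmod -opprB complex.normcN. Qed.

Lemma cm_xx y : cm y y = 0%R.
Proof. by rewrite /cm subrr /cmod /= expr0n /= addr0 sqrtr0. Qed.

Lemma Tp_ge0 y y' : (0 <= Tp y y')%R.
Proof. exact: powR_ge0. Qed.

Lemma Tp_sym y y' : Tp y y' = Tp y' y.
Proof. by rewrite /Tp cm_sym. Qed.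

Lemma Tp_xx y : Tp y y = 0%R.
Proof. by rewrite /Tp cm_xx powR0 // gt_eqF // (lt_le_trans ltr01 p1). Qed.

Fixpoint Wc (s : seq R) : R :=
  match s with
  | u :: ((b :: _) as t) => (Tp b u + Wc t)%R
  | _ => 0%R
  end.

Lemma Wc_ge0 s : (0 <= Wc s)%R.
Proof.
elim: s => // u [|b t] //= IH.
by rewrite addr_ge0 // Tp_ge0.
Qed.

Lemma Wc_cons s b : (Wc s <= Wc (b :: s))%R.
Proof. by case: s => //= z t; rewrite lerDr Tp_ge0. Qed.

Lemma Wc_sum s : Wc s = (\sum_(i < (size s).-1) Tp (nth 0%R s i.+1) (nth 0%R s i))%R.
Proof.
elim: s => [|u [|b t] IH]; first by rewrite big_ord0.
  by rewrite big_ord0.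
rewrite big_ord_recl; congr (_ + _)%R; rewrite -[LHS]/(Wc (b :: t)) IH /=; apply: eq_bigr => i _ /=; by [].
Qed.

Lemma Wc_le s : sorted <%R s -> (forall z, z \in s -> X z) ->
  (Wc s <= v `^ p)%R.
Proof.
move=> ss sX.
have p0 : (p != 0)%R by rewrite gt_eqF // (lt_le_trans ltr01 p1).
case Hs: s => [|u [|b t]]; try by rewrite /= powR_ge0.
rewrite -Hs.
have elt : (((\sum_(i < (size t).+1) (cmod (h (nth 0%R s i.+1) - h (nth 0%R s i))) `^ p)
    `^ (p^-1))%R <= v)%R.
  rewrite -lee_fin -Hv /var_p; apply: ereal_sup_ubound.
  exists (size t).+1, (fun i => nth 0%R s i); split => //.
  - move=> i it; apply: sX; apply: mem_nth; by rewrite Hs.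
  - move=> i it; rewrite Hs; move: ss; rewrite Hs /= => /andP[ub pbt].
    case: i it => [|i] it //=.
    by move/(pathP 0%R): pbt => /(_ i it).
have -> : Wc s = (\sum_(i < (size t).+1) (cmod (h (nth 0%R s i.+1) - h (nth 0%R s i))) `^ p)%R.
  by rewrite Wc_sum Hs.
set S := (\sum_(i < _) _)%R in elt *.
have S0 : (0 <= S)%R by rewrite sumr_ge0 // => i _; exact: powR_ge0.
have v0 : (0 <= v)%R by apply: le_trans elt; exact: powR_ge0.
rewrite -[S](@powRr1 _ S S0) -[X in (X `^ 1)%R]/(S) -[in X in (S `^ X)%R](mulVf p0).
rewrite powRrM; apply: ge0_ler_powR => //; first exact: (le_trans ler01 p1).
  by rewrite nnegrE powR_ge0.
Qed.

Lemma sumsup (S : nat -> set R) (l : seq nat) (c : R) : uniq l ->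
  (forall j, has_sup (S j)) ->
  (forall w : nat -> R, (forall j, j \in l -> S j (w j)) -> (\sum_(j <- l) w j <= c)%R) ->
  (\sum_(j <- l) sup (S j) <= c)%R.
Proof.
elim: l c => [|a l IH] c ul hs H.
  have := H (fun _ => 0%R) (fun j (jl : j \in [::]) => False_ind _ (notF jl)).
  by rewrite !big_nil.
move: ul => /andP[al ul]; rewrite big_cons.
suff : (sup (S a) <= c - \sum_(j <- l) sup (S j))%R by move=> hh; lra.
apply: ge_sup; first exact: (hs a).1.
move=> x Sx.
suff : (\sum_(j <- l) sup (S j) <= c - x)%R by move=> hh; lra.
apply: IH => // w hw.
pose w' := fun j => if j == a then x else w j.
have := H w'.
have -> : (\sum_(j <- a :: l) w' j = x + \sum_(j <- l) w j)%R.
  rewrite big_cons /w' eqxx; congr (_ + _)%R; apply: eq_big_seq => j jl.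
  by case: eqP => // ja; move: al; rewrite -ja jl.
move=> hh.
have : (x + \sum_(j <- l) w j <= c)%R.
  apply: hh => j; rewrite in_cons /w' => /orP[/eqP ->|jl]; first by rewrite eqxx.
  by case: eqP => [->//|_]; exact: hw.
move=> hh'; lra.
Qed.

Section Windows.
Variables (N M : nat) (Wd : nat -> R -> Prop).
Hypotheses (M0 : (0 < M)%N) (HWX : forall j z, Wd j z -> X z)
  (Hsep : forall j k y y', (j + M <= k)%N -> (k < N)%N -> Wd j y -> Wd k y' -> (y < y')%R).

Definition Sv j : set R :=
  [set r | r = 0%R \/ exists y y', [/\ Wd j y, Wd j y' & r = Tp y y']].

Lemma gapM a j : (a < j)%N -> (a %% M = j %% M)%N -> (a + M <= j)%N.
Proof.
move=> aj h'.
have : (a %/ M < j %/ M)%N.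
  rewrite ltnNge; apply/negP => H.
  have : (j %/ M * M <= a %/ M * M)%N by rewrite leq_mul2r H orbT.
  move: aj (divn_eq a M) (divn_eq j M); rewrite h'. lia.
move=> lt.
have : ((a %/ M).+1 * M <= j %/ M * M)%N by rewrite leq_mul2r lt orbT.
move: (divn_eq a M) (divn_eq j M); rewrite h'. lia.
Qed.

Lemma chain (r : nat) (l : seq nat) : sorted ltn l -> all (fun j => j %% M == r)%N l ->
  all (fun j => j < N)%N l ->
  forall w : nat -> R, (forall j, j \in l -> Sv j (w j)) ->
  exists s, [/\ sorted <%R s, (forall z, z \in s -> exists2 j, j \in l & Wd j z) &
    (\sum_(j <- l) w j <= Wc s)%R].
Proof.
elim: l => [|a l IH] sl al nl w hw.
  by exists [::]; split => //; rewrite big_nil.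
have sl' : sorted ltn l := path_sorted sl.
move: al nl => /andP[ar al'] /andP[aN nl'].
have [s [ss sz sw]] := IH sl' al' nl' w (fun j jl => hw j (ltac:(by rewrite in_cons jl orbT))).
have gap j : j \in l -> (a + M <= j)%N.
  move=> jl; apply: gapM.
    by have := order_path_min ltn_trans sl => /allP /(_ j jl).
  by move/allP: al' => /(_ j jl) /eqP ->; apply/eqP.
have hd y : Wd a y -> path <%R y s.
  move=> Wy; case: s ss sz sw => //= z t -> sz _; rewrite andbT.
  have [j jl Wz] := sz z (mem_head _ _).
  apply: (Hsep _ _ _ _ (gap j jl) _ Wy Wz).
  by move/allP: nl' => /(_ j jl).
have win z : (exists2 j, j \in l & Wd j z) -> exists2 j, j \in a :: l & Wd j z.
  by move=> [j jl Wz]; exists j => //; rewrite in_cons jl orbT.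
rewrite big_cons.
case: (hw a (mem_head _ _)) => [->|[y [y' [Wy Wy' ->]]]].
  exists s; split => //; first by move=> z /sz /win.
  by rewrite add0r.
have [yy|yy|yy] := ltgtP y y'.
- exists (y :: y' :: s); split.
  + by rewrite /= yy hd.
  + move=> z; rewrite !in_cons => /orP[/eqP ->|/orP[/eqP ->|/sz /win]] //;
      by exists a => //; rewrite mem_head.
  + rewrite [Wc (y :: y' :: s)]/= Tp_sym lerD2l; apply: le_trans sw _; exact: Wc_cons.
- exists (y' :: y :: s); split.
  + by rewrite /= yy hd.
  + move=> z; rewrite !in_cons => /orP[/eqP ->|/orP[/eqP ->|/sz /win]] //;
      by exists a => //; rewrite mem_head.
  + rewrite [Wc (y' :: y :: s)]/= lerD2l; apply: le_trans sw _; exact: Wc_cons.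
- exists s; split => //; first by move=> z /sz /win.
  by rewrite yy Tp_xx add0r.
Qed.

Lemma Sv_sup j : has_sup (Sv j).
Proof.
split; first by exists 0%R; left.
exists (v `^ p)%R => r [->|[y [y' [Wy Wy' ->]]]]; first exact: powR_ge0.
have [yy|yy|->] := ltgtP y y'.
- have := @Wc_le [:: y; y'] _ _; rewrite /= addr0 Tp_sym; apply.
    by rewrite /= yy.
  by move=> z; rewrite !inE => /orP[/eqP->|/eqP->]; apply: HWX; eauto.
- have := @Wc_le [:: y'; y] _ _; rewrite /= addr0; apply.
    by rewrite /= yy.
  by move=> z; rewrite !inE => /orP[/eqP->|/eqP->]; apply: HWX; eauto.
- by rewrite Tp_xx powR_ge0.
Qed.

Lemma total_bound : (\sum_(0 <= j < N) sup (Sv j) <= v `^ p *+ M)%R.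
Proof.
pose G j := sup (Sv j).
have E : (\sum_(0 <= j < N) G j = \sum_(0 <= r < M) \sum_(0 <= j < N | (j %% M == r)%N) G j)%R.
  rewrite [RHS](eq_bigr (fun r => \sum_(0 <= j < N) (if (j %% M == r)%N then G j else 0%R))%R);
    last by move=> r _; rewrite big_mkcond.
  rewrite [RHS]exchange_big /=; apply: eq_bigr => j _.
  rewrite -big_mkcond -big_filter (_ : [seq _ <- _ | _] = [:: (j %% M)%N]) ?big_seq1 //.
  rewrite (@eq_filter _ _ (pred1 (j %% M)%N)); last by move=> r /=; rewrite eq_sym.
  by apply: filter_pred1_uniq; rewrite ?iota_uniq // mem_index_iota ltn_mod.
rewrite E (_ : (v `^ p *+ M = \sum_(0 <= r < M) v `^ p)%R); last by rewrite sumr_const_nat subn0.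
apply: ler_sum => r _.
rewrite -big_filter; apply: sumsup.
- by apply: filter_uniq; exact: iota_uniq.
- exact: Sv_sup.
move=> w hw.
have sl : sorted ltn [seq j <- index_iota 0 N | (j %% M == r)%N].
  apply: sorted_filter; first exact: ltn_trans.
  by rewrite /index_iota subn0; exact: iota_ltn_sorted.
have a1 : all (fun j => j %% M == r)%N [seq j <- index_iota 0 N | (j %% M == r)%N].
  by apply/allP => j; rewrite mem_filter => /andP[].
have a2 : all (fun j => j < N)%N [seq j <- index_iota 0 N | (j %% M == r)%N].
  by apply/allP => j; rewrite mem_filter mem_index_iota => /andP[_ /andP[]].
have [s [ss sz sw]] := @chain r [seq j <- index_iota 0 N | (j %% M == r)%N] sl a1 a2 w hw.
apply: (le_trans sw); apply: Wc_le => // z /sz [j _ Wz]; exact: HWX Wz.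
Qed.

End Windows.

End Chain.

Section Final.
Variables (p : R) (h : R -> Cx R) (eps v : R).
Hypotheses (p1 : (1 <= p)%R) (eps0 : (0 < eps)%R) (Hv : var_p X p h = v%:E).

Let p0 : (0 <= p)%R. Proof. exact: le_trans ler01 p1. Qed.
Let pn0 : (p != 0)%R. Proof. by rewrite gt_eqF // (lt_le_trans ltr01 p1). Qed.

Lemma mm_gt0 : 0 < (m \x m) [set: R * R].
Proof.
rewrite -setXTT product_measure1E //.
apply: mule_gt0; apply: (lt_le_trans lte01); rewrite -[X in X <= _]mX1; apply: le_measure; rewrite ?inE //.
Qed.

Lemma osc_ge0 x : 0 <= osc X m h eps x.
Proof.
apply: ess_sup_gee; first exact: mm_gt0.
apply: nearW => yy /=; case: asboolP => _ //; rewrite lee_fin.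
exact: (cm_ge0 h yy.1 yy.2).
Qed.

Lemma osc_le x c : (0 <= c)%R ->
  (forall y y', ball_m X m x eps y -> ball_m X m x eps y' -> (cm h y y' <= c)%R) ->
  osc X m h eps x <= c%:E.
Proof.
move=> c0 H; apply/ess_supP; apply: nearW => yy /=.
case: asboolP => [[b1 b2]|_]; rewrite lee_fin //.
exact: H.
Qed.

Lemma le_int_nm (D : set R) (f g : R -> \bar R) : (forall x, D x -> 0 <= f x) ->
  (forall x, D x -> f x <= g x) ->
  \int[m]_(x in D) f x <= \int[m]_(x in D) g x.
Proof.
move=> f0 fg.
have g0 x : D x -> 0 <= g x by move=> Dx; apply: le_trans (f0 _ Dx) (fg _ Dx).
rewrite !ge0_integralE //=; apply: ereal_sup_le => _ [k kf <-]; exists k => //.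
move=> x; apply: le_trans (kf x) _; rewrite /patch; case: ifP => // /[1!inE] Dx.
exact: fg.
Qed.

Lemma bound_N (N M : nat) (a : nat -> R) : (0 < N)%N -> (0 < M)%N ->
  (forall j, (j <= N)%N -> Fc (a j) = (j%:R / N%:R)%R) ->
  (forall x, X x -> (a 0%N < x)%R /\ (x <= a N)%R) ->
  (2 * eps <= (M.-1)%:R / N%:R)%R ->
  \int[m]_(x in X) poweR (osc X m h eps x) p <= ((v `^ p *+ M) / N%:R)%:E.
Proof.
move=> N0 M0 Ha Hx HM.
pose Wd j z := exists2 x, A a j x & ball_m X m x eps z.
have HWX j z : Wd j z -> X z by move=> [x _ []].
have Hsep j k y y' : (j + M <= k)%N -> (k < N)%N -> Wd j y -> Wd k y' -> (y < y')%R.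
  move=> jk kN [x Ax bx] [x' Ax' bx'].
  apply: (@sep N a N0 Ha j k x x' y y' eps _ kN _ Ax Ax' bx bx'); first by lia.
  rewrite !Ha //; try lia.
  rewrite -mulrBl -natrB; last by lia.
  apply: (le_trans HM); rewrite ler_wpM2r ?invr_ge0 ?ler0n // ler_nat; lia.
pose G j := sup (Sv p h Wd j).
have Gsup j := @Sv_sup p h v p1 Hv Wd HWX j.
have G0 j : (0 <= G j)%R by apply: ub_le_sup => //; [exact: (Gsup j).2 | left].
have Hg x : X x -> poweR (osc X m h eps x) p <= \sum_(j < N) (G j * \1_(A a j) x)%:E.
  move=> Xx; have [j jN Ajx] := @cover N a Hx x Xx.
  apply: (@le_trans _ _ (G j)%:E).
    have H1 : osc X m h eps x <= ((G j) `^ p^-1)%:E.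
      apply: osc_le; first exact: powR_ge0.
      move=> y y' b1 b2.
      have T1 : (Tp p h y y' <= G j)%R.
        apply: ub_le_sup; first exact: (Gsup j).2.
        by right; exists y, y'; split => //; [exists x|exists x].
      rewrite -[cm h y y'](@powRr1 _ _ (cm_ge0 h y y')) -(mulfV pn0) powRrM.
      by apply: ge0_ler_powR => //; rewrite ?invr_ge0 ?nnegrE ?powR_ge0.
    apply: le_trans (gt0_ler_poweR p0 _ _ H1) _.
    - by rewrite in_itv /= osc_ge0 leey.
    - by rewrite in_itv /= lee_fin powR_ge0 leey.
    by rewrite poweR_EFin -powRrM mulVf // powRr1.
  rewrite (bigD1 (Ordinal jN)) //= indicE mem_set // mulr1 leeDl //.
  by apply: sume_ge0 => i _; rewrite lee_fin mulr_ge0 // indicE ler0n.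
apply: le_trans; first by apply: (@le_int_nm X _ _ _ Hg) => x _; exact: poweR_ge0.
rewrite ge0_integral_sum //; last first.
  by move=> j x _; rewrite lee_fin mulr_ge0 // indicE ler0n.
  by move=> j; apply/measurable_realfun.measurable_EFinP; apply: (@measurable_realfun.measurable_funM _ _ _ _ (cst (G j)) (\1_(A a j))) => //;
     apply: measurable_realfun.measurable_indic; exact: mA_meas.
under eq_bigr => j _.
  rewrite (@integralZl_indic _ _ _ m _ mX (fun _ => A a j) (G j)); last exact: mA_meas; last by rewrite ltNge G0.
  rewrite integral_indic //; last exact: mA_meas.
  rewrite setIidl; last by move=> z [].
  rewrite [X in _ * X](_ : _ = (N%:R^-1)%:E); last exact: (@mA N a N0 Ha j (ltn_ord j)).
  rewrite -EFinM.
  over.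
rewrite sumEFin lee_fin -mulr_suml ler_wpM2r ?invr_ge0 ?ler0n //.
rewrite (le_trans _ (@total_bound p h v p1 Hv N M Wd M0 HWX Hsep)) // big_mkord.
exact: lexx.
Qed.

Lemma main_fin : \int[m]_(x in X) poweR (osc X m h eps x) p <= (2 * eps)%:E * poweR (v%:E) p.
Proof.
rewrite poweR_EFin -EFinM.
set V := (v `^ p)%R.
have V0 : (0 <= V)%R by exact: powR_ge0.
apply/lee_addgt0Pr => e e0.
pose N := (Num.trunc (2 * V / e)).+1.
pose M := (Num.trunc (2 * eps * N%:R)).+2.
have N0 : (0 < N)%N by [].
have M0 : (0 < M)%N by [].
have [a [Ha Hx]] := @quantiles N N0.
have N0' : (0 < N%:R :> R)%R by rewrite ltr0n.
have HM : (2 * eps <= (M.-1)%:R / N%:R)%R.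
  rewrite ler_pdivlMr //.
  have := @truncn_itv _ (2 * eps * N%:R)%R.
  rewrite mulr_ge0 ?mulr_ge0 ?ler0n ?(ltW eps0) // => /(_ isT) /andP[_ h2].
  by apply: ltW; rewrite /M /=.
apply: le_trans (@bound_N N M a N0 M0 Ha Hx HM) _.
rewrite -EFinD lee_fin.
have hM : (M%:R <= 2 * eps * N%:R + 2 :> R)%R.
  rewrite /M -addn2 natrD lerD2r truncn_le mulr_ge0 ?mulr_ge0 ?ler0n ?(ltW eps0) //.
have hN : (2 * V < e * N%:R)%R.
  have := @truncn_itv _ (2 * V / e)%R.
  rewrite divr_ge0 ?mulr_ge0 ?(ltW e0) // => /(_ isT) /andP[_ h2].
  by rewrite -ltr_pdivrMl // mulrC.
rewrite ler_pdivrMr // -mulr_natr.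
have h3 : (V * M%:R <= V * (2 * eps * N%:R + 2))%R by rewrite ler_wpM2l.
apply: (le_trans h3).
have E1 : (V * (2 * eps * N%:R + 2) = 2 * eps * V * N%:R + 2 * V)%R by ring.
have E2 : ((2 * eps * V + e) * N%:R = 2 * eps * V * N%:R + e * N%:R)%R by ring.
rewrite E1 E2; lra.
Qed.

End Final.
Lemma two_points : exists x y, [/\ X x, X y & (x < y)%R].
Proof.
have [x0 Xx0] : X !=set0.
  apply/set0P/negP => /eqP X0; move: mX1; rewrite X0 measure0 => /eqP.
  by rewrite eqe eq_sym oner_eq0.
have [[y [Xy yx]]|H] := pselect (exists y, X y /\ y <> x0).
  have [yx'|xy] := ltP y x0; first by exists y, x0.
  exists x0, y; split => //; rewrite lt_neqAle xy andbT; apply/eqP => E.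
  by apply: yx; rewrite E.
exfalso.
have sub : X `<=` [set x0].
  move=> z Xz; apply: contrapT => zx; apply: H; by exists z.
have hle : m X <= m [set x0] by apply: le_measure => //; rewrite inE; [exact: mX | exact: measurable_set1].
by move: hle; rewrite mX1 m0 lee_fin ler10.
Qed.

End Part1.

Theorem lemma4p2 (R : realType) (X : set R) (m : probability R R) :
  compact X -> m X = 1 -> (forall x : R, m [set x] = 0) ->
  forall (p : R) (h : R -> Cx R) (eps : R), (1 <= p)%R -> (0 < eps)%R ->
  \int[m]_(x in X) poweR (osc X m h eps x) p
    <= (2 * eps)%:E * poweR (var_p X p h) p.
Proof.
move=> cX mX1 m0 p h eps p1 eps0.
case Hv: (var_p X p h) => [v| |].
  exact: (@main_fin R X m cX mX1 m0 p h eps v p1 eps0 Hv).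
- rewrite poweRyr ?gt_eqF ?(lt_le_trans ltr01 p1) // mulry gtr0_sg ?mul1e ?leey //.
  by rewrite mulr_gt0.
- exfalso.
  have [x [y [Xx Xy xy]]] := @two_points R X m cX mX1 m0.
  have : ((((\sum_(i < 1) (cmod (h ((fun i => if i == 0%N then x else y) i.+1)
     - h ((fun i => if i == 0%N then x else y) i))) `^ p) `^ (p^-1))%R)%:E
     <= var_p X p h).
    apply: ereal_sup_ubound; exists 1%N, (fun i => if i == 0%N then x else y).
    split => //.
    - by move=> [|[|i]] //=.
    - by move=> [|i] //=.
  by rewrite Hv leeNy_eq.
Qed.
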